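(* Let $r\ge 3$ and $n\ge\frac{(r-1)(2r+1)}{2}$, and let $\mathcal{H}$ be an $n$-vertex $r$-graph with $\delta_{r-1}^{+}(\mathcal{H})>\frac{2n}{2r+1}$. Let $V_1,\ldots,V_r\subseteq V(\mathcal{H})$ be pairwise disjoint sets, each independent in $\mathcal{H}$, with $|V_i|>\frac{2n}{2r+1}$ for all $i\in[r]$, and let $Z=V(\mathcal{H})\setminus(V_1\cup\cdots\cup V_r)$. Let $v\in Z$ and let $v_1\in V_1\cap N_{\mathcal{H}}(v)$. Then there exists an edge $e\in\mathcal{H}$ with $\{v,v_1\}\subseteq e$ and $|e\cap(V_2\cup\cdots\cup V_r)|\ge r-2$.
   Context: An $r$-graph $\mathcal{H}$ is a collection of $r$-subsets (edges) of a finite vertex set $V(\mathcal{H})$. The shadow is $\partial\mathcal{H}=\{e\in\binom{V(\mathcal{H})}{r-1}\colon e\subseteq E \text{ for some } E\in\mathcal{H}\}$. For $e\in\partial\mathcal{H}$, $N_{\mathcal{H}}(e)=\{u\in V(\mathcal{H})\colon e\cup\{u\}\in\mathcal{H}\}$. For a vertex $v$, $N_{\mathcal{H}}(v)=\{u\in V(\mathcal{H})\setminus\{v\}\colon \{u,v\}\subseteq E\text{ for some } E\in\mathcal{H}\}$. The minimum positive codegree is $\delta_{r-1}^{+}(\mathcal{H})=\min\{|N_{\mathcal{H}}(e)|\colon e\in\partial\mathcal{H}\}$. A set $I\subseteq V(\mathcal{H})$ is independent in $\mathcal{H}$ if every edge contains at most one vertex of $I$. *)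

(* Defs.v *)
(* Vertex set V(H) is the finType T; an r-graph is a set of r-subsets of T. *)
From mathcomp Require Import all_boot.
Set Implicit Arguments. Unset Strict Implicit. Unset Printing Implicit Defensive.

Section Hyper.
Variable T : finType.

Definition is_rgraph (r : nat) (H : {set {set T}}) : Prop :=
  forall E, E \in H -> #|E| = r.

Definition shadow (r : nat) (H : {set {set T}}) : {set {set T}} :=
  [set e : {set T} | (#|e| == r.-1) && [exists E in H, e \subset E]].

Definition codeg_nbhd (H : {set {set T}}) (e : {set T}) : {set T} :=
  [set u | (u |: e) \in H].

Definition vert_nbhd (H : {set {set T}}) (v : T) : {set T} :=
  [set u | (u != v) && [exists E in H, (u \in E) && (v \in E)]].

(* delta^+_{r-1}(H) > c, i.e. every shadow set has codegree neighbourhood larger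
   than c; here c = num/den, stated without division as num < den * |N(e)|. *)
Definition min_pos_codeg_gt (r : nat) (H : {set {set T}}) (num den : nat) : Prop :=
  forall e, e \in shadow r H -> num < den * #|codeg_nbhd H e|.

Definition independent (H : {set {set T}}) (I : {set T}) : Prop :=
  forall E, E \in H -> #|E :&: I| <= 1.
End Hyper.

(* Main.v *)
Require Import Defs.
From mathcomp Require Import all_boot.
From mathcomp Require Import zify.

Lemma mem_bigcup_nat (T : finType) (V : nat -> {set T}) (a b : nat) (x : T) :
  reflect (exists i, a <= i < b /\ x \in V i) (x \in \bigcup_(a <= i < b) V i).
Proof.
elim: b => [|b IH].
  by rewrite big_geq // inE; constructor => -[i []]; lia.
case: (leqP a b) => hab.
  rewrite big_nat_recr //= in_setU.
  apply: (iffP orP).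
    case=> [/IH [i [Hi xi]]|xb]; [exists i; split=>//; lia|exists b; split=>//; lia].
  move=> [i [Hi xi]]; case: (ltnP i b) => hib.
    by left; apply/IH; exists i; split=>//; lia.
  by right; have -> : b = i by lia.
rewrite big_geq ?inE; last lia.
by constructor => -[i []]; lia.
Qed.

Lemma card_union_ge (T : finType) (V : nat -> {set T}) (r m : nat) :
  (forall i j, 1 <= i <= r -> 1 <= j <= r -> i != j -> [disjoint V i & V j]) ->
  m <= r ->
  \sum_(1 <= i < m.+1) #|V i| <= #|\bigcup_(1 <= i < m.+1) V i|.
Proof.
move=> Hd; elim: m => [|m IH] Hm.
  by rewrite big_geq // big_geq.
rewrite [X in X <= _]big_nat_recr //=.
have -> : \bigcup_(1 <= i < m.+2) V i = \bigcup_(1 <= i < m.+1) V i :|: V m.+1 by rewrite big_nat_recr.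
have Hdis : [disjoint \bigcup_(1 <= i < m.+1) V i & V m.+1].
  rewrite -setI_eq0; apply/eqP/setP => x; rewrite !inE.
  apply/negP => /andP[/mem_bigcup_nat[i [Hi xi]] xm].
  have Hij : i != m.+1 by apply/eqP; lia.
  have := Hd i m.+1 ltac:(lia) ltac:(lia) Hij.
  rewrite disjoints_subset => /subsetP/(_ x xi); rewrite inE xm //.
have := leq_card_setU (\bigcup_(1 <= i < m.+1) V i) (V m.+1).
rewrite Hdis => -[_ /eqP ->].
by rewrite leq_add2r IH // ltnW.
Qed.

Lemma L1 {r} : 3 <= r -> 1 <= 1 <= r. Proof. lia. Qed.
Lemma L2 {r i} : 2 <= i < r.+1 -> 1 <= i <= r. Proof. lia. Qed.
Lemma L3 {r i} : 2 <= i < r.+1 -> 1 != i. Proof. move=> h; apply/eqP; lia. Qed.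
Lemma L4 {r i} : 1 <= i < r.+1 -> 1 <= i <= r. Proof. lia. Qed.
Lemma L5 {r i} : 1 <= i <= r -> i != 1 -> 2 <= i < r.+1. Proof. move=> h /eqP; lia. Qed.
Lemma L6 {r i} : 1 <= i <= r -> 1 <= i < r.+1. Proof. lia. Qed.

Theorem claim2p6 (T : finType) (r : nat) (H : {set {set T}})
    (V : nat -> {set T}) (v v1 : T) :
  3 <= r ->
  (r.-1 * (2 * r + 1) <= 2 * #|T|) ->
  is_rgraph r H ->
  min_pos_codeg_gt r H (2 * #|T|) (2 * r + 1) ->
  (forall i j, 1 <= i <= r -> 1 <= j <= r -> i != j -> [disjoint V i & V j]) ->
  (forall i, 1 <= i <= r -> independent H (V i)) ->
  (forall i, 1 <= i <= r -> 2 * #|T| < (2 * r + 1) * #|V i|) ->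
  v \in ~: (\bigcup_(1 <= i < r.+1) V i) ->
  v1 \in V 1 :&: vert_nbhd H v ->
  exists2 e, e \in H &
    [&& v \in e, v1 \in e & r - 2 <= #|e :&: \bigcup_(2 <= i < r.+1) V i|].
Proof.
move=> r3 _ Hr Hcod Hdis Hind Hsz Hv /setIP[v1V1].
rewrite inE => /andP[v1v /existsP[E0 /and3P[E0H v1E0 vE0]]].
have r1 := L1 r3.
set W := \bigcup_(2 <= i < r.+1) V i.
set P := fun e : {set T} => [&& e \in H, v \in e & v1 \in e].
have PE0 : P E0 by rewrite /P E0H vE0 v1E0.
case: (arg_maxnP (fun e => #|e :&: W|) PE0) => e /and3P[eH ve v1e] Hmax.
case: (leqP (r - 2) #|e :&: W|) => Hk.
  by exists e => //; rewrite ve v1e Hk.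
exfalso.
have v1W : v1 \notin W.
  apply/negP => /mem_bigcup_nat[i [Hi xi]].
  have := Hdis 1 i r1 (L2 Hi) (L3 Hi).
  by rewrite disjoints_subset => /subsetP/(_ v1 v1V1); rewrite inE xi.
have vU : forall i, 1 <= i <= r -> v \notin V i.
  move=> i Hi; apply/negP => vi; move: Hv; rewrite inE => /negP; apply.
  by apply/mem_bigcup_nat; exists i; split=>//; apply: L6.
have vW : v \notin W.
  by apply/negP => /mem_bigcup_nat[i [Hi xi]]; move: (vU i (L2 Hi)); rewrite xi.
have He1 : #|e :&: V 1| <= 1 := Hind 1 r1 e eH.
set R := e :\: (W :|: V 1 :|: [set v]).
have HR : 0 < #|R|.
  have Hsub : e \subset (e :&: W) :|: (e :&: V 1) :|: [set v] :|: R.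
    apply/subsetP => x xe; rewrite /R !inE xe /=.
    by case: (x \in W); case: (x \in V 1); case: (x == v).
  have := subset_leq_card Hsub.
  rewrite Hr //.
  move=> h; have h2 := leq_trans h (leq_card_setU _ _).
  have h3 := leq_card_setU ((e :&: W) :|: (e :&: V 1)) [set v].
  have h4 := leq_card_setU (e :&: W) (e :&: V 1).
  rewrite cards1 in h3.
  case: h3 => h3 _; case: h4 => h4 _.
  move: h2 h3 h4 Hk He1 r3; clear; lia.
case/card_gt0P: HR => z; rewrite /R !inE => /andP[/norP[/norP[zW zV1] zv] ze].
set e' := e :\ z.
have ce' : #|e'| = r.-1.
  have := cardsD1 z e; rewrite ze Hr // /e' => ->; by rewrite add1n.
have e'sh : e' \in shadow r H.
  rewrite inE ce' eqxx /=; apply/existsP; exists e; rewrite eH /=.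
  by apply/subsetP => x; rewrite !inE => /andP[].
have HN := Hcod e' e'sh.
set N := codeg_nbhd H e'.
set Z := ~: \bigcup_(1 <= i < r.+1) V i.
have NZ : N \subset Z.
  apply/subsetP => u; rewrite inE => uH.
  have ue' : u \notin e'.
    apply/negP => ue'; move: uH; have -> : u |: e' = e' by apply/setUidPr; rewrite sub1set.
    move=> /Hr; rewrite ce'.
    by move: r3; clear; lia.
  have ve' : v \in e' by rewrite !inE ve andbT; apply/eqP => vz; move: zv; rewrite vz eqxx.
  have v1e' : v1 \in e'.
    by rewrite !inE v1e andbT; apply/eqP => vz; move: zV1; rewrite -vz v1V1.
  rewrite inE; apply/negP => /mem_bigcup_nat[i [Hi ui]].
  case: (eqVneq i 1) => [Ei|ni1].
    have := Hind 1 r1 _ uH.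
    have : [set u; v1] \subset (u |: e') :&: V 1.
      apply/subsetP => x /set2P[]->.
        by rewrite in_setI setU11 -Ei.
      by rewrite in_setI setU1r.
    move/subset_leq_card; rewrite cards2.
    have -> : u != v1 by apply/eqP => uv; move: ue'; rewrite uv v1e'.
    by move=> a b; have := leq_trans a b.
  have uW : u \in W by apply/mem_bigcup_nat; exists i; split=>//; apply: L5 => //; apply: L4.
  have Pu : P (u |: e').
    by rewrite /P uH !setU1r.
  have := Hmax _ Pu.
  have -> : (u |: e') :&: W = u |: (e :&: W).
    apply/setP => x; rewrite !inE.
    case: (eqVneq x u) => [->|//]; first by rewrite uW.
    case: (eqVneq x z) => [->|//]; first by rewrite (negbTE zW) !andbF.
  rewrite cardsU1.
  have -> : u \notin e :&: W.
    rewrite inE negb_and; apply/orP; left; apply/negP => ue.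
    move: ue'; rewrite !inE ue andbT negbK => /eqP uz.
    by move: zW; rewrite -uz uW.
  by rewrite /geq /= add1n ltnn.
have HZ := subset_leq_card NZ.
have Hsum : 2 * #|T| * r <= (2 * r + 1) * \sum_(1 <= i < r.+1) #|V i|.
  rewrite big_distrr /=.
  have -> : 2 * #|T| * r = \sum_(1 <= i < r.+1) 2 * #|T|.
    by rewrite sum_nat_const_nat subn1 /= mulnC.
  rewrite big_nat_cond [X in _ <= X]big_nat_cond.
  apply: leq_sum => i /andP[hi _]; apply: ltnW; apply: Hsz; exact: L4.
have Hu := card_union_ge _ _ _ _ Hdis (leqnn r).
have Htot : #|Z| + #|\bigcup_(1 <= i < r.+1) V i| = #|T|.
  by rewrite addnC /Z cardsC.
move: HN HZ Hsum Hu Htot.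
move: #|N| #|Z| (\sum_(1 <= i < r.+1) #|V i|) #|\bigcup_(1 <= i < r.+1) V i| #|T|.
clear; nia.
Qed.
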